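(* Let $a, b, n$ be positive integers with $b>1$, $n>1$ and $\gcd(r_b(n),a)=1$, and let $S = S_a(b,n)$. Then $S$ satisfies Wilf's inequality: $\operatorname{F}(S) \le \operatorname{e}(S)\,\operatorname{n}(S) - 1$.
   Context: For $\ell \ge 1$, $r_b(\ell) = \sum_{j=0}^{\ell-1} b^j$, and $r_b(0)=0$. For $i \ge 1$, $a_i := r_b(n) + a\, r_b(i-1)$; $S_a(b,n)$ is the numerical semigroup generated by $\{a_i : i \ge 1\}$. For a numerical semigroup $S$: $\operatorname{F}(S)$ is the largest integer not in $S$; $\operatorname{e}(S)$ is the embedding dimension (cardinality of the minimal generating set); $\operatorname{n}(S)$ is the cardinality of $\{s \in S : s < \operatorname{F}(S)\}$. *)

(* Defs.v *)
From mathcomp Require Import all_boot.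
Set Implicit Arguments. Unset Strict Implicit. Unset Printing Implicit Defensive.

Definition rb (b l : nat) : nat := \sum_(j < l) b ^ j.

(* a_i = r_b(n) + a * r_b(i-1), meaningful for i >= 1. *)
Definition agen (a b n i : nat) : nat := rb b n + a * rb b (i - 1).

Definition Sab (a b n : nat) (x : nat) : Prop :=
  exists s : seq nat, x = sumn (map (fun i => agen a b n i.+1) s).

Definition gen_by (G : seq nat) (x : nat) : Prop :=
  exists s : seq nat, all (fun y => y \in G) s /\ x = sumn s.

Definition is_frobenius (S : nat -> Prop) (F : nat) : Prop :=
  ~ S F /\ forall y, F < y -> S y.

(* G is the minimal generating set of S: G (duplicate-free) generates S,
   and no element of G lies in the submonoid generated by the others
   (equivalently, no proper subset of G generates S). *)
Definition is_min_gen_set (S : nat -> Prop) (G : seq nat) : Prop :=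
  uniq G /\ (forall x, S x <-> gen_by G x) /\
  (forall g, g \in G -> ~ gen_by (rem g G) g).

Definition is_small_elts (S : nat -> Prop) (F : nat) (L : seq nat) : Prop :=
  uniq L /\ forall x, x \in L <-> (S x /\ x < F).

(* Main.v *)
Require Import Defs.
From mathcomp Require Import all_boot zify.
From Stdlib Require Import Classical.
Set Implicit Arguments. Unset Strict Implicit. Unset Printing Implicit Defensive.

Fixpoint dsf (b f N : nat) : nat :=
  match f with 0 => 0 | f'.+1 => N %% b + dsf b f' (N %/ b) end.
Definition ds b N := dsf b N N.

Lemma dsf0 b f : dsf b f 0 = 0.
Proof. by elim: f => //= f IH; rewrite mod0n div0n IH. Qed.

Lemma dsf_fuel b f g N : 1 < b -> N <= f -> N <= g -> dsf b f N = dsf b g N.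
Proof.
move=> b1; elim: f g N => [|f IH] [|g] N; rewrite ?leqn0.
- by [].
- by move/eqP=> -> _; rewrite !dsf0.
- by move=> _ /eqP ->; rewrite !dsf0.
move=> Hf Hg /=; congr (_ + _); case: (posnP N) => [->|N0]; first by rewrite div0n !dsf0.
apply: IH.
  have : N %/ b < N by rewrite ltn_Pdiv.
  lia.
have : N %/ b < N by rewrite ltn_Pdiv.
lia.
Qed.

Lemma ds0 b : ds b 0 = 0.
Proof. by []. Qed.

Lemma dsE b d z : 1 < b -> d < b -> ds b (d + b * z) = d + ds b z.
Proof.
move=> b1 db; rewrite /ds.
case: (posnP (d + b * z)) => [H|H].
  have -> : d = 0 by lia.
  have -> : z = 0 by nia.
  by rewrite muln0.
case E: (d + b * z) => [|f]; first by rewrite E in H.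
rewrite /= -E.
have -> : (d + b * z) %% b = d by rewrite addnC mulnC modnMDl modn_small.
have -> : (d + b * z) %/ b = z by rewrite addnC mulnC divnMDl ?divn_small ?addn0 //; lia.
congr (_ + _); apply: dsf_fuel => //; nia.
Qed.

Lemma ds_dec b N : 1 < b -> ds b N = N %% b + ds b (N %/ b).
Proof.
move=> b1; rewrite {1}(divn_eq N b) addnC mulnC dsE //; apply: ltn_pmod; lia.
Qed.

Lemma ds_le b x : 1 < b -> ds b x <= x.
Proof.
move=> b1; elim: x {-2}x (leqnn x) => [|N IH] x Hx.
  by move: Hx; rewrite leqn0 => /eqP ->.
case: (posnP x) => [->//|x0].
rewrite ds_dec //.
have Hd : x %/ b < x by rewrite ltn_Pdiv.
have := IH (x %/ b) ltac:(lia).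
have := divn_eq x b.
nia.
Qed.

Lemma ds_sub b x y : 1 < b -> ds b (x + y) <= ds b x + ds b y.
Proof.
move=> b1; elim: (x + y) {-2}x {-2}y (leqnn (x + y)) => [|N IH] x' y' H.
  have -> : x' = 0 by lia.
  have -> : y' = 0 by lia.
  by [].
case: (posnP (x' + y')) => [E|E].
  have -> : x' = 0 by lia.
  have -> : y' = 0 by lia.
  by [].
rewrite (ds_dec x') // (ds_dec y') //.
have Ex := divn_eq x' b; have Ey := divn_eq y' b.
have mx := ltn_pmod x' (ltnW b1); have my := ltn_pmod y' (ltnW b1).
set x0 := x' %% b in Ex mx *; set x1 := x' %/ b in Ex *.
set y0 := y' %% b in Ey my *; set y1 := y' %/ b in Ey *.
case: (ltnP (x0 + y0) b) => Hs.
  have -> : x' + y' = (x0 + y0) + b * (x1 + y1) by lia.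
  rewrite dsE //.
  have : ds b (x1 + y1) <= ds b x1 + ds b y1 by apply: IH; nia.
  lia.
have -> : x' + y' = (x0 + y0 - b) + b * ((x1 + y1) + 1) by nia.
rewrite dsE //; last by lia.
have h1 : ds b ((x1 + y1) + 1) <= ds b (x1 + y1) + ds b 1 by apply: IH; nia.
have h2 : ds b (x1 + y1) <= ds b x1 + ds b y1 by apply: IH; nia.
have h3 : ds b 1 = 1.
  by have := @dsE b 1 0 b1 b1; rewrite muln0 addn0 => ->.
lia.
Qed.

Lemma ds_pow b c : 1 < b -> ds b (b ^ c) = 1.
Proof.
move=> b1; elim: c => [|c IH].
  by have := @dsE b 1 0 b1 b1; rewrite muln0 addn0 => ->.
by rewrite expnS -(add0n (b * _)) dsE ?IH //; lia.
Qed.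

Lemma ds_sumpow b s : 1 < b -> ds b (sumn (map (fun c => b ^ c) s)) <= size s.
Proof.
move=> b1; elim: s => [|c s IH] //=.
have := ds_sub (b ^ c) (sumn (map (fun c => b ^ c) s)) b1; rewrite ds_pow //.
lia.
Qed.

Lemma ds_shift b n y q : 1 < b -> y < b ^ n -> ds b (y + b ^ n * q) = ds b y + ds b q.
Proof.
move=> b1; elim: n y => [|n IH] y Hy.
  by move: Hy; rewrite expn0 ltnS leqn0 => /eqP ->; rewrite mul1n.
rewrite (ds_dec y) //.
have Ey := divn_eq y b; have my := ltn_pmod y (ltnW b1).
have y1lt : y %/ b < b ^ n by rewrite ltn_divLR; [rewrite -expnSr | lia].
have -> : y + b ^ n.+1 * q = y %% b + b * (y %/ b + b ^ n * q).
  rewrite expnS; nia.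
rewrite dsE // IH //; lia.
Qed.

Lemma ds_compl b n z : 1 < b -> z < b ^ n -> ds b (b ^ n - 1 - z) + ds b z = n * (b - 1).
Proof.
move=> b1; elim: n z => [|n IH] z Hz.
  by move: Hz; rewrite expn0 ltnS leqn0 => /eqP ->.
rewrite (ds_dec z) //.
have Ez := divn_eq z b; have mz := ltn_pmod z (ltnW b1).
have z1lt : z %/ b < b ^ n by rewrite ltn_divLR; [rewrite -expnSr | lia].
have -> : b ^ n.+1 - 1 - z = (b - 1 - z %% b) + b * (b ^ n - 1 - z %/ b).
  rewrite expnS; set P := b ^ n in z1lt *; set z0 := z %% b in Ez mz *; set z1 := z %/ b in Ez z1lt *.
  clearbody P z0 z1; subst z.
  have [w ->] : exists w, P = z1.+1 + w by exists (P - z1.+1); lia.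
  nia.
rewrite dsE //; last by lia.
have := IH (z %/ b) z1lt. lia.
Qed.
Lemma rbS b l : rb b l.+1 = rb b l + b ^ l.
Proof. by rewrite /rb big_ord_recr. Qed.

Lemma rbSl b l : rb b l.+1 = 1 + b * rb b l.
Proof.
rewrite /rb big_ord_recl expn0 big_distrr /=; congr (_ + _).
by apply: eq_bigr => i _; rewrite expnS.
Qed.

Lemma rb0 b : rb b 0 = 0.
Proof. by rewrite /rb big_ord0. Qed.

Lemma rb1 b : rb b 1 = 1.
Proof. by rewrite rbS rb0. Qed.

Lemma rb_pow b c : 0 < b -> (b - 1) * rb b c + 1 = b ^ c.
Proof.
move=> b0; elim: c => [|c IH]; first by rewrite rb0 muln0.
rewrite rbS expnS mulnDr -addnAC IH; nia.
Qed.

Lemma rb_add b c n : rb b (c + n) = rb b c + b ^ c * rb b n.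
Proof.
elim: n => [|n IH]; first by rewrite addn0 rb0 muln0 addn0.
by rewrite addnS !rbS IH mulnDr -expnD addnA.
Qed.

Lemma rb_lt b i j : 0 < b -> i < j -> rb b i < rb b j.
Proof.
move=> b0; elim: j => [//|j IH]; rewrite ltnS leq_eqVlt => /orP[/eqP ->|H].
  by rewrite rbS -{1}(addn0 (rb b j)) ltn_add2l expn_gt0 b0.
by apply: (ltn_trans (IH H)); rewrite rbS -{1}(addn0 (rb b j)) ltn_add2l expn_gt0 b0.
Qed.

Lemma rb_ge b n : 1 < b -> 2 * n <= rb b n + 1.
Proof.
move=> b1; elim: n => [|n IH]; first by rewrite rb0.
rewrite rbS; case: n IH => [|n] IH; first by rewrite rb0 expn0.
have : b <= b ^ n.+1 by rewrite -{1}(expn1 b) leq_pexp2l //; lia.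
lia.
Qed.

Definition Rep b p t := exists s : seq nat, size s = p /\ t = sumn (map (rb b) s).

Lemma Rep0 b : Rep b 0 0.
Proof. by exists [::]. Qed.

Lemma RepD b p t p' t' : Rep b p t -> Rep b p' t' -> Rep b (p + p') (t + t').
Proof.
move=> [s [<- ->]] [s' [<- ->]]; exists (s ++ s').
by rewrite size_cat map_cat sumn_cat.
Qed.

Lemma Rep_nseq b d c : Rep b d (d * rb b c).
Proof.
exists (nseq d c); rewrite size_nseq; split=> //.
by elim: d => [|d IH] //=; rewrite -IH mulSn.
Qed.

Lemma Rep_pad b p t k : Rep b p t -> p <= k -> Rep b k t.
Proof.
move=> H pk; have -> : k = p + (k - p) by lia.
have -> : t = t + (k - p) * rb b 0 by rewrite rb0 muln0 addn0.
by apply: RepD => //; apply: Rep_nseq.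
Qed.

Lemma Rep_pow b p t : 0 < b -> Rep b p t ->
  exists s, size s = p /\ (b - 1) * t + p = sumn (map (fun c => b ^ c) s).
Proof.
move=> b0 [s [<- ->]]; exists s; split=> //.
elim: s => [|c s IH] /=; first by rewrite muln0.
rewrite -(rb_pow c b0) -IH; nia.
Qed.

Lemma key_comb b m u : 1 < b -> u < rb b m.+2 ->
  exists j p p', [/\ 1 <= j <= m.+1, u + j <= rb b m.+2, Rep b p u,
                   Rep b p' (rb b m.+2 - j - u) & p + p' <= (b - 1) * j + 1].
Proof.
move=> b1; elim: m u => [|m IH] u Hu.
  move: Hu; rewrite rbSl rb1 muln1 => Hu.
  exists 1, u, (b - u); split => //; try lia.
  - by have := Rep_nseq b u 1; rewrite rb1 muln1.
  - by have := Rep_nseq b (b - u) 1; rewrite rb1 muln1; congr Rep; lia.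
set R := rb b m.+2 in IH *.
have ER : rb b m.+3 = 1 + b * R by rewrite rbSl.
rewrite ER in Hu *.
have R0 : 0 < R by rewrite /R rbSl; lia.
have Eu := divn_eq u R; have me := ltn_pmod u R0.
set d := u %/ R in Eu *; set e := u %% R in Eu me *.
have HR : R = rb b m.+2 by [].
clearbody d e R; subst u.
case: (posnP e) => [e0|e0].
  subst e; rewrite addn0 in Hu *.
  have db : d <= b by nia.
  exists 1, d, (b - d); split => //; try nia.
  - by rewrite HR; apply: Rep_nseq.
  - have -> : 1 + b * R - 1 - d * R = (b - d) * R by rewrite mulnBl; lia.
    by rewrite HR; apply: Rep_nseq.
have db : d < b.
  case: (ltnP d b) => // H; have : b * R <= d * R by rewrite leq_mul2r H orbT.
  nia.
have [j [p [p' [Hj Hje Hp Hp' Hs]]]] := IH e me.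
exists j.+1, (d + p), (b - 1 - d + p'); split; try nia.
- by apply: RepD => //; rewrite HR; apply: Rep_nseq.
- have -> : 1 + b * R - j.+1 - (d * R + e) = (b - 1 - d) * R + (R - j - e).
    rewrite mulnBl mulnBl mul1n; nia.
  by apply: RepD => //; rewrite HR; apply: Rep_nseq.
Qed.

Lemma agenE a b n i : agen a b n i.+1 = rb b n + a * rb b i.
Proof. by rewrite /agen subn1. Qed.

Lemma sumn_agen a b n s :
  sumn (map (fun i => agen a b n i.+1) s) = size s * rb b n + a * sumn (map (rb b) s).
Proof. elim: s => [|i s IH] /=; first by rewrite muln0. rewrite agenE IH; nia. Qed.

Lemma SabE a b n x : Sab a b n x <-> exists k t, x = k * rb b n + a * t /\ Rep b k t.
Proof.
split.
  move=> [s ->]; exists (size s), (sumn (map (rb b) s)); split; first exact: sumn_agen.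
  by exists s.
move=> [k [t [-> [s [Hs ->]]]]]; exists s; by rewrite sumn_agen Hs.
Qed.

Lemma SabI a b n k t p : Rep b p t -> p <= k -> Sab a b n (k * rb b n + a * t).
Proof. by move=> H pk; apply/SabE; exists k, t; split => //; apply: Rep_pad H pk. Qed.

Lemma mod_cancel r a x y : coprime r a -> x < r -> y < r -> (a * x) %% r = (a * y) %% r -> x = y.
Proof.
move=> cop xr yr.
wlog xy : x y xr yr / x <= y.
  move=> W E; case: (leqP x y) => H; first exact: W.
  by symmetry; apply: W => //; exact: ltnW.
move=> /eqP; rewrite eq_sym eqn_mod_dvd; last by rewrite leq_mul2l xy orbT.
rewrite -mulnBr Gauss_dvdr // => Hd.
case: (posnP (y - x)) => [H|H]; first by lia.
have := dvdn_leq H Hd; lia.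
Qed.

Lemma inv_exists r a x : 0 < r -> coprime r a -> exists u, u < r /\ (a * u) %% r = x %% r.
Proof.
move=> r0 cop; have [u0 _ Hd] := Bezoutl a r0.
move: Hd; rewrite (eqP cop) => /dvdnP [c Hc].
exists ((u0 * ((r - 1) * x)) %% r); split; first exact: ltn_pmod.
rewrite modnMmr.
have E : a * (u0 * ((r - 1) * x)) + x * r = x + (c * (r - 1) * x) * r.
  have -> : a * (u0 * ((r - 1) * x)) = (u0 * a) * (r - 1) * x by nia.
  clear cop; case: r r0 Hc => // r' _ Hc; rewrite subn1 /=.
  case: c Hc => [|k] Hc; first by rewrite mul0n in Hc; lia.
  have -> : u0 * a = k * r'.+1 + r' by lia.
  nia.
have := congr1 (modn^~ r) E; rewrite /= addnC modnMDl [x + _]addnC modnMDl; done.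
Qed.

Definition fj a b n j := (b - 1) * j * rb b n + a * (rb b n - j).

Lemma gap_lemma a b n x : 0 < a -> 1 < b -> 1 < n -> coprime (rb b n) a ->
  ~ Sab a b n x -> exists j y, [/\ 1 <= j <= n.-1, Sab a b n y & fj a b n j = x + y].
Proof.
move=> a0 b1 n1 cop nS.
set r := rb b n.
have r0 : 0 < r by have := rb_ge n b1; rewrite /r; lia.
have [u [ur Hu]] := inv_exists x r0 cop.
have En : n = (n - 2).+2 by lia.
have Hu' : u < rb b (n - 2).+2 by rewrite -En.
have [j [p [p' [Hj Hju Hp Hp' Hs]]]] := key_comb b1 Hu'.
rewrite -En -/r in Hju Hp'.
have Ex := divn_eq x r; have Eu := divn_eq (a * u) r.
set X := x %/ r in Ex; set A := (a * u) %/ r in Eu.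
set rho := x %% r in Ex Hu; rewrite Hu in Eu.
clearbody X A rho.
have XA : X < A + p.
  case: (ltnP X (A + p)) => // H; exfalso; apply: nS.
  have -> : x = (X - A) * r + a * u by rewrite Ex Eu mulnBl; nia.
  by apply: SabI Hp _; lia.
exists j, (((b - 1) * j + A - X) * r + a * (r - j - u)); split.
- lia.
- by apply: SabI Hp' _; lia.
rewrite /fj -/r.
have -> : r - j = (r - j - u) + u by lia.
rewrite mulnDr Ex Eu.
set T := a * (r - j - u); set B := (b - 1) * j.
have -> : ((B + A - X) * r) = (B + A) * r - X * r by rewrite mulnBl.
have : X * r <= (B + A) * r by rewrite leq_mul2r; apply/orP; right; lia.
nia.
Qed.

Lemma fj_notin a b n j : 0 < a -> 1 < b -> 1 < n -> coprime (rb b n) a ->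
  1 <= j <= n.-1 -> ~ Sab a b n (fj a b n j).
Proof.
move=> a0 b1 n1 cop Hj /SabE [k [t [Ef Hk]]].
set r := rb b n in Ef cop.
have r2 := rb_ge n b1; rewrite -/r in r2.
have r0 : 0 < r by lia.
have jr : j < r by lia.
have Et := divn_eq t r; set q := t %/ r in Et; set t0 := t %% r in Et.
have t0r : t0 < r by apply: ltn_pmod.
have Emod : (a * t0) %% r = (a * (r - j)) %% r.
  have := congr1 (modn^~ r) Ef; rewrite /fj -/r /= !modnMDl => ->.
  by rewrite /t0 modnMmr.
have Et0 : t0 = r - j by apply: (mod_cancel cop) => //; lia.
clearbody q t0; subst t0.
have Ekq : k + a * q = (b - 1) * j.
  apply/eqP; rewrite -(eqn_pmul2r r0); apply/eqP.
  move: Ef; rewrite /fj -/r Et; nia.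
have [s [Hs Hpow]] := Rep_pow (ltnW b1) Hk.
have Hds := ds_sumpow s b1; rewrite -Hpow Hs in Hds.
have EP := rb_pow n (ltnW b1); rewrite -/r in EP.
set P := b ^ n in EP.
set B := b - 1 in Ekq Hpow Hds EP.
have B1 : 1 <= B by rewrite /B; lia.
have EB : b - 1 = B by [].
clearbody B.
have jn : j <= n - 1 by lia.
case: (ltnP (q * (a + 1)) P) => Hm.
  have EN : B * t + k = (P - 1 - q * (a + 1)) + P * q.
    rewrite Et -EP; nia.
  rewrite EN ds_shift // in Hds; last by lia.
  have Hc := @ds_compl b n _ b1 Hm; rewrite -/P in Hc.
  have Hs1 : ds b (q * (a + 1)) <= a * q + ds b q.
    rewrite mulnDr muln1.
    have := ds_sub (q * a) q b1; have := ds_le (q * a) b1; lia.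
  have : (n - 1) * B < n * B by rewrite ltn_mul2r; lia.
  have : B * j <= B * (n - 1) by rewrite leq_mul2l jn orbT.
  rewrite EB in Hc.
  have h1 : B * (n - 1) < n * B by rewrite mulnC ltn_mul2r; lia.
  have h2 : B * j <= B * (n - 1) by rewrite leq_mul2l jn orbT.
  lia.
have h3 : a * q <= B * (n - 1).
  have : B * j <= B * (n - 1) by rewrite leq_mul2l jn orbT.
  lia.
have h4 : q <= a * q by rewrite leq_pmull.
have h5 : B * (2 * (n - 1)) <= B * r by rewrite leq_mul2l; apply/orP; right; lia.
have h6 : q * (a + 1) = a * q + q by rewrite mulnDr muln1 mulnC.
have h7 : B * (2 * (n - 1)) = B * (n - 1) + B * (n - 1) by rewrite mulnA (mulnC B 2) -mulnA mul2n addnn.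
lia.
Qed.

Lemma frob_exists (P : nat -> Prop) x0 B :
  ~ P x0 -> (forall y, B <= y -> P y) -> exists F, ~ P F /\ forall y, F < y -> P y.
Proof.
move=> nx0 HB.
suff H : forall k, (forall y, k <= y -> P y) -> (exists x, x < k /\ ~ P x) ->
  exists F, ~ P F /\ forall y, F < y -> P y.
  apply: (H B HB); exists x0; split => //.
  by case: (ltnP x0 B) => // /HB.
elim=> [|k IH] Hk [x [xk nx]]; first by [].
case: (classic (P k)) => Pk.
  apply: IH.
    move=> y ky; case: (ltnP k y) => H; first by apply: Hk.
    by have -> : y = k by lia.
  exists x; split => //; case: (ltnP x k) => // H.
  have E : x = k by lia.
  by rewrite E in nx.
by exists k; split => // y ky; apply: Hk.
Qed.

Lemma lists_exist (P : nat -> Prop) k : exists L H : seq nat,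
  [/\ uniq L, uniq H, (forall x, x \in L <-> P x /\ x < k),
      (forall x, x \in H <-> ~ P x /\ x < k) & size L + size H = k].
Proof.
elim: k => [|k [L [H [uL uH HL HH Hs]]]].
  by exists [::], [::]; split => // x; split => // [[]].
case: (classic (P k)) => Pk.
  exists (k :: L), H; split => //=.
  - rewrite uL andbT; apply/negP => /HL [_]; lia.
  - move=> x; rewrite in_cons; split.
      by move=> /orP [/eqP ->|/HL [? ?]]; split => //; lia.
    move=> [Px xk]; case: (ltnP x k) => H1; first by apply/orP; right; apply/HL.
    by apply/orP; left; apply/eqP; lia.
  - move=> x; rewrite HH; split=> [[? ?]|[Px ?]]; split => //; try lia.
    case: (ltnP x k) => // H1.
    have E : x = k by lia.
    by subst x.
  - lia.
exists L, (k :: H); split => //=.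
- rewrite uH andbT; apply/negP => /HH [_]; lia.
- move=> x; rewrite HL; split=> [[? ?]|[Px ?]]; split => //; try lia.
  case: (ltnP x k) => // H1.
  have E : x = k by lia.
  by subst x.
- move=> x; rewrite in_cons; split.
    by move=> /orP [/eqP ->|/HH [? ?]]; split => //; lia.
  move=> [Px xk]; case: (ltnP x k) => H1; first by apply/orP; right; apply/HH.
  by apply/orP; left; apply/eqP; lia.
- lia.
Qed.

Definition Gl a b n := [seq agen a b n i.+1 | i <- iota 0 n].

Lemma gen_by0 G : gen_by G 0.
Proof. by exists [::]. Qed.

Lemma gen_byD G x y : gen_by G x -> gen_by G y -> gen_by G (x + y).
Proof.
move=> [s [Hs ->]] [t [Ht ->]]; exists (s ++ t); split.
  by rewrite all_cat Hs Ht.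
by rewrite sumn_cat.
Qed.

Lemma gen_byM G g m : g \in G -> gen_by G (m * g).
Proof.
move=> Hg; elim: m => [|m IH]; first by rewrite mul0n; apply: gen_by0.
rewrite mulSn; apply: gen_byD IH; exists [:: g]; split; first by rewrite /= Hg.
by rewrite /= addn0.
Qed.

Lemma gen_agen a b n i : 0 < n -> gen_by (Gl a b n) (agen a b n i.+1).
Proof.
move=> n0; elim: i {-2}i (leqnn i) => [|N IH] i Hi.
  have -> : i = 0 by lia.
  exists [:: agen a b n 1]; split; last by rewrite /= addn0.
  by rewrite /= andbT; apply/mapP; exists 0 => //; rewrite mem_iota; lia.
case: (ltnP i n) => Hin.
  exists [:: agen a b n i.+1]; split; last by rewrite /= addn0.
  by rewrite /= andbT; apply/mapP; exists i => //; rewrite mem_iota; lia.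
have -> : agen a b n i.+1 = agen a b n (i - n).+1 + (a * b ^ (i - n)) * agen a b n 1.
  rewrite !agenE rb0 muln0 addn0.
  have -> : i = (i - n) + n by lia.
  rewrite rb_add addnK; nia.
apply: gen_byD; first by apply: IH; lia.
by apply: gen_byM; apply/mapP; exists 0 => //; rewrite mem_iota; lia.
Qed.

Lemma Gl_idx a b n s : all (fun y => y \in Gl a b n) s ->
  exists cs, all (fun c => c < n) cs /\ s = map (fun i => agen a b n i.+1) cs.
Proof.
elim: s => [|y s IH] /=; first by exists [::].
move=> /andP [/mapP [c Hc ->] /IH [cs [Hcs ->]]].
exists (c :: cs); split => //=; rewrite Hcs andbT.
by move: Hc; rewrite mem_iota; lia.
Qed.

Lemma agen_inj a b n : 0 < a -> 0 < b -> injective (fun i => agen a b n i.+1).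
Proof.
move=> a0 b0 i j /=; rewrite !agenE => /eqP; rewrite eqn_add2l eqn_mul2l.
rewrite (negbTE (lt0n_neq0 a0)) /= => /eqP E.
case: (ltngtP i j) => // H; have := rb_lt b0 H; lia.
Qed.

Lemma min_gen a b n : 0 < a -> 1 < b -> 1 < n -> coprime (rb b n) a ->
  is_min_gen_set (Sab a b n) (Gl a b n).
Proof.
move=> a0 b1 n1 cop.
have uG : uniq (Gl a b n) by rewrite /Gl map_inj_uniq ?iota_uniq //; apply: agen_inj; lia.
split; [by [] | split].
  move=> x; split.
    move=> [s ->]; elim: s => [|i s IH] /=; first by apply: gen_by0.
    by apply: gen_byD => //; apply: gen_agen; lia.
  move=> [s [/Gl_idx [cs [_ ->]] ->]]; by exists cs.
move=> g /mapP [i]; rewrite mem_iota => Hi -> [s [Hs Hsum]].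
have Hs' : all (fun y => y \in Gl a b n) s.
  apply/allP => y ys; have := allP Hs y ys; rewrite mem_rem_uniq //.
  by move=> /andP [].
have [cs [Hcs Es]] := Gl_idx Hs'.
set r := rb b n in cop.
have ri : rb b i < r by apply: rb_lt; lia.
move: Hsum; rewrite Es sumn_agen agenE -/r.
case: cs Hcs Es => [|c [|c' cs']] Hcs Es /=.
- rewrite mul0n muln0; lia.
- rewrite addn0 mul1n => /eqP.
  rewrite eqn_add2l eqn_mul2l (negbTE (lt0n_neq0 a0)) /= => /eqP E.
  have := allP Hs (agen a b n c.+1); rewrite Es mem_head => /(_ isT).
  by rewrite mem_rem_uniq // inE /= !agenE E eqxx.
set T := (rb b c + (rb b c' + sumn [seq rb b i | i <- cs'])).
set k := (size cs').
move=> E.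
have TE : T <= rb b i by nia.
have E2 : a * (rb b i - T) = k.+1 * r by rewrite mulnBr; nia.
have Hd : r %| a * (rb b i - T) by rewrite E2 dvdn_mull.
rewrite Gauss_dvdr // in Hd.
have : 0 < rb b i - T.
  case: (posnP (rb b i - T)) => // H0; rewrite H0 muln0 in E2; lia.
move=> H0; have := dvdn_leq H0 Hd; lia.
Qed.
Unset Implicit Arguments.

Theorem mainTheorem20 (a b n : nat) :
  0 < a -> 1 < b -> 1 < n -> coprime (rb b n) a ->
  exists (F : nat) (G L : seq nat),
    [/\ is_frobenius (Sab a b n) F,
        is_min_gen_set (Sab a b n) G,
        is_small_elts (Sab a b n) F L &
        F + 1 <= size G * size L].
Proof.
move=> a0 b1 n1 cop.
set r := rb b n.
have fj_le : forall j, 1 <= j <= n.-1 -> fj a b n j <= (b - 1) * (n - 1) * r + a * r.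
  move=> j Hj; rewrite /fj -/r.
  have : (b - 1) * j <= (b - 1) * (n - 1) by rewrite leq_mul2l; apply/orP; right; lia.
  have : a * (r - j) <= a * r by rewrite leq_mul2l leq_subr orbT.
  have : (b - 1) * j * r <= (b - 1) * (n - 1) * r by rewrite leq_mul2r; apply/orP; right; rewrite leq_mul2l; apply/orP; right; lia.
  lia.
have [F [nF HF]] : exists F, ~ Sab a b n F /\ forall y, F < y -> Sab a b n y.
  apply: (@frob_exists _ (fj a b n 1) ((b - 1) * (n - 1) * r + a * r).+1).
    by apply: fj_notin => //; lia.
  move=> y Hy; apply: NNPP => nS.
  have [j [z [Hj _ E]]] := gap_lemma a0 b1 n1 cop nS.
  have := fj_le j Hj; lia.
have [L [H [uL uH HL HH Hs]]] := lists_exist (Sab a b n) F.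
exists F, (Gl a b n), L; split => //.
- exact: min_gen.
have fjF : forall j, 1 <= j <= n.-1 -> fj a b n j <= F.
  move=> j Hj; case: (leqP (fj a b n j) F) => // H1.
  by exfalso; apply: (fj_notin a0 b1 n1 cop Hj); apply: HF.
have uH' : uniq (F :: H) by rewrite /= uH andbT; apply/negP => /HH [_]; lia.
have sub : {subset (F :: H) <= [seq fj a b n j - y | j <- iota 1 n.-1, y <- L]}.
  move=> h; rewrite in_cons => Hh.
  have [nh hF] : ~ Sab a b n h /\ h <= F.
    case/orP: Hh => [/eqP ->|/HH [? ?]]; split => //; lia.
  have [j [y [Hj Sy E]]] := gap_lemma a0 b1 n1 cop nh.
  have -> : h = fj a b n j - y by lia.
  apply: allpairs_f; first by rewrite mem_iota; lia.
  apply/HL; split => //.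
  have := fjF j Hj; case: (ltngtP y F) => // [H1|H1] H2; first lia.
  by subst y.
have := uniq_leq_size uH' sub; rewrite size_allpairs size_iota /= /Gl size_map size_iota.
move=> Hsz.
have : n.-1 * size L + size L = n * size L by case: (n) n1 => // n' _ /=; rewrite mulSn addnC.
lia.
Qed.
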